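(* Let $n\ge3$, $-2<l<0$, $1<p\le p_*=\frac{n+2+2l}{n-2}$, and let $f$ satisfy $(f_1)$, $(f_2)$, $(f_2')$. Assume there exist positive numbers $r_0,C_1$ such that $f(r)\ge C_1 r^{l}$ for $r>r_0$. Then there exists a constant $C>0$, independent of $\alpha$, such that whenever $u(r;\alpha)$ (for any $0<\alpha<\infty$) is a positive entire solution (i.e. $u(r;\alpha)>0$ for all $r\ge0$), it satisfies $u(r;\alpha)\le C r^{\frac{2-n}{2}}$ for all $r\ge r_0$.
   Context: Standing hypotheses: $(f_1)$ $f\in C(0,\infty)$, $f(r)>0$ for $r>0$; $(f_2)$ $f(r)=O(r^l)$ as $r\to\infty$; $(f_2')$ $f(r)=O(r^\sigma)$ as $r\to0$, $\sigma>-2$. For $\alpha>0$, $u(r;\alpha)$ is the unique solution of (1.4) $u''+\frac{n-1}{r}u'+f(r)(u^+)^p=0$, $u(0;\alpha)=\alpha$, $u'(0;\alpha)=0$, $u^+=\max\{u,0\}$; it corresponds to the radial solution $u(|x|)$ of $-\Delta u=f(|x|)u^p$ on $\mathbb R^n$. *)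

(* Defs.v *)
From Stdlib Require Import Reals.
From Coquelicot Require Import Coquelicot.
Open Scope R_scope.

Definition pospow (x q : R) : R := if Rlt_dec 0 x then Rpower x q else 0.

Definition upos (x : R) : R := Rmax x 0.

(* u is a solution of (1.4):
   u'' + (n-1)/r u' + f(r) (u^+)^p = 0 on (0,oo), u(0) = alpha, u'(0) = 0.
   Since f may be singular at r = 0 (f = O(r^sigma), sigma > -2), the initial
   conditions are imposed as: u(0) = alpha, u continuous at 0 from the right,
   and u'(r) -> 0 as r -> 0+. *)
Definition radial_sol (n : nat) (f : R -> R) (p alpha : R) (u : R -> R) : Prop :=
  u 0 = alpha /\
  filterlim u (at_right 0) (locally alpha) /\
  exists du : R -> R,
    (forall r, 0 < r -> is_derive u r (du r)) /\
    filterlim du (at_right 0) (locally 0) /\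
    (forall r, 0 < r ->
       is_derive du r (- ((INR n - 1) / r) * du r - f r * pospow (upos (u r)) p)).

Definition p_star (n : nat) (l : R) : R := (INR n + 2 + 2 * l) / (INR n - 2).

(* Main.v *)
Require Import Defs.
From Stdlib Require Import Reals Lra Lia.
From Coquelicot Require Import Coquelicot.
Open Scope R_scope.

Lemma D_mult (f g : R -> R) (x df dg : R) : is_derive f x df -> is_derive g x dg ->
  is_derive (fun t => f t * g t) x (df * g x + f x * dg).
Proof. intros H1 H2. apply (is_derive_mult f g); auto. intros; apply Rmult_comm. Qed.

Lemma D_plus (f g : R -> R) (x df dg : R) : is_derive f x df -> is_derive g x dg ->
  is_derive (fun t => f t + g t) x (df + dg).
Proof. intros H1 H2. apply (is_derive_plus f g); auto. Qed.

Lemma D_opp (f : R -> R) (x df : R) : is_derive f x df -> is_derive (fun t => - f t) x (- df).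
Proof. intros H1. apply (is_derive_opp f); auto. Qed.

Lemma D_id (x:R) : is_derive (fun t:R => t) x 1.
Proof. apply (is_derive_id x). Qed.

Lemma D_const (c x:R) : is_derive (fun _:R => c) x 0.
Proof. apply (is_derive_const c x). Qed.

Lemma D_eq (f : R -> R) (x l l' : R) : is_derive f x l -> l = l' -> is_derive f x l'.
Proof. intros H ->; exact H. Qed.

Lemma incr_lem (g dg : R -> R) a b : a <= b ->
  (forall x, a <= x <= b -> is_derive g x (dg x)) ->
  (forall x, a < x < b -> 0 <= dg x) -> g a <= g b.
Proof.
  intros Hab Hd Hp. destruct (Req_dec a b) as [->|Hne]; [lra|].
  destruct (MVT_cor2 g dg a b) as [c [Hc Hc2]]; [lra| |].
  - intros c Hc; apply is_derive_Reals; auto.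
  - assert (0 <= dg c * (b - a)) by (apply Rmult_le_pos; [apply Hp; lra| lra]). lra.
Qed.

Lemma pospow_pos x p : 0 < x -> pospow (upos x) p = Rpower x p.
Proof.
  intros Hx. unfold pospow, upos. rewrite Rmax_left by lra.
  destruct (Rlt_dec 0 x); [reflexivity| lra].
Qed.

Lemma Rpower_pos x y : 0 < Rpower x y.
Proof. unfold Rpower; apply exp_pos. Qed.

Lemma v_deriv (m : nat) (f u du : R -> R) (p : R) s :
  (1 <= m)%nat -> 0 < s -> 0 < u s ->
  is_derive du s (- ((INR (S m) - 1) / s) * du s - f s * pospow (upos (u s)) p) ->
  is_derive (fun t => - (t ^ m * du t)) s (s ^ m * f s * Rpower (u s) p).
Proof.
  intros Hm Hs Hu Hd.
  eapply D_eq.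
  - apply D_opp, D_mult; [apply is_derive_pow, D_id | exact Hd].
  - rewrite pospow_pos by auto. rewrite S_INR.
    destruct m as [|k]; [lia|]. simpl pred. simpl pow.
    field. lra.
Qed.

Lemma v_mono (m : nat) (f u du : R -> R) (p : R) a b :
  (1 <= m)%nat ->
  (forall r, 0 < r -> 0 < f r) ->
  (forall r, 0 <= r -> 0 < u r) ->
  (forall r, 0 < r -> is_derive du r (- ((INR (S m) - 1) / r) * du r - f r * pospow (upos (u r)) p)) ->
  0 < a <= b -> - (a ^ m * du a) <= - (b ^ m * du b).
Proof.
  intros Hm Hf Hu Hdd Hab.
  apply (incr_lem (fun t => - (t ^ m * du t)) (fun s => s ^ m * f s * Rpower (u s) p)); [lra| |].
  - intros x Hx. apply v_deriv; auto; try lra. apply Hu; lra. apply Hdd; lra.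
  - intros x Hx. assert (0 < x ^ m) by (apply pow_lt; lra).
    assert (0 < f x) by (apply Hf; lra). pose proof (Rpower_pos (u x) p).
    apply Rmult_le_pos; [apply Rmult_le_pos|]; lra.
Qed.

Lemma v_nonneg (m : nat) (f u du : R -> R) (p : R) s :
  (1 <= m)%nat ->
  (forall r, 0 < r -> 0 < f r) ->
  (forall r, 0 <= r -> 0 < u r) ->
  (forall r, 0 < r -> is_derive du r (- ((INR (S m) - 1) / r) * du r - f r * pospow (upos (u r)) p)) ->
  filterlim du (at_right 0) (locally 0) ->
  0 < s -> 0 <= - (s ^ m * du s).
Proof.
  intros Hm Hf Hu Hdd Hlim Hs.
  destruct (Rle_lt_dec 0 (- (s ^ m * du s))) as [h|h]; [exact h|exfalso].
  set (eps := - - (s ^ m * du s)).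
  assert (Heps : 0 < eps) by (unfold eps; lra).
  assert (HL : locally 0 (fun y : R => Rabs y < eps)).
  { exists (mkposreal eps Heps). intros y Hy. unfold ball in Hy; simpl in Hy.
    unfold AbsRing_ball, abs, minus, plus, opp in Hy; simpl in Hy.
    rewrite Ropp_0, Rplus_0_r in Hy. exact Hy. }
  destruct (Hlim _ HL) as [d Hd].
  set (t := Rmin (Rmin s 1) d / 2).
  assert (Ht1 : 0 < t).
  { unfold t. pose proof (cond_pos d). repeat apply Rmin_case; lra. }
  assert (Ht2 : t < s /\ t <= 1 /\ t < d).
  { unfold t. pose proof (cond_pos d). pose proof (Rmin_l (Rmin s 1) d).
    pose proof (Rmin_r (Rmin s 1) d). pose proof (Rmin_l s 1). pose proof (Rmin_r s 1). lra. }
  assert (Hb : ball 0 d t).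
  { unfold ball; simpl. unfold AbsRing_ball, abs, minus, plus, opp; simpl.
    rewrite Ropp_0, Rplus_0_r, Rabs_right by lra. lra. }
  specialize (Hd t Hb Ht1). simpl in Hd.
  assert (Htm : 0 < t ^ m <= 1).
  { split; [apply pow_lt; lra|]. rewrite <- (pow1 m). apply pow_incr; lra. }
  assert (Hvt : - (t ^ m * du t) <= - (s ^ m * du s)).
  { apply (v_mono m f u du p); auto; lra. }
  assert (Rabs (t ^ m * du t) < eps).
  { rewrite Rabs_mult, Rabs_right by lra.
    apply Rle_lt_trans with (1 * Rabs (du t)); [|lra].
    apply Rmult_le_compat_r; [apply Rabs_pos| lra]. }
  pose proof (Rle_abs (t ^ m * du t)).
  unfold eps in *. lra.
Qed.

Lemma u_mono (m : nat) (f u du : R -> R) (p : R) a b :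
  (1 <= m)%nat ->
  (forall r, 0 < r -> 0 < f r) ->
  (forall r, 0 <= r -> 0 < u r) ->
  (forall r, 0 < r -> is_derive u r (du r)) ->
  (forall r, 0 < r -> is_derive du r (- ((INR (S m) - 1) / r) * du r - f r * pospow (upos (u r)) p)) ->
  filterlim du (at_right 0) (locally 0) ->
  0 < a <= b -> u b <= u a.
Proof.
  intros Hm Hf Hu Hd Hdd Hlim Hab.
  cut (- u a <= - u b); [lra|].
  apply (incr_lem (fun t => - u t) (fun t => - du t)); [lra| |].
  - intros x Hx. apply D_opp, Hd; lra.
  - intros x Hx. assert (0 < x ^ m) by (apply pow_lt; lra).
    pose proof (v_nonneg m f u du p x Hm Hf Hu Hdd Hlim ltac:(lra)).
    nra.
Qed.

Lemma Rpower_decr_neg (a b l : R) : l < 0 -> 0 < a <= b -> Rpower b l <= Rpower a l.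
Proof.
  intros Hl Hab.
  replace l with (- - l) by ring. rewrite (Rpower_Ropp b), (Rpower_Ropp a).
  apply Rinv_le_contravar; [apply Rpower_pos|].
  apply Rle_Rpower_l; lra.
Qed.

Lemma main_est (m : nat) (f u du : R -> R) (p l C1 r0 r : R) :
  (1 <= m)%nat -> 1 < p -> l < 0 -> 0 < C1 -> 0 < r0 -> r0 <= r ->
  (forall r, 0 < r -> 0 < f r) ->
  (forall r, r0 < r -> C1 * Rpower r l <= f r) ->
  (forall r, 0 <= r -> 0 < u r) ->
  (forall r, 0 < r -> is_derive u r (du r)) ->
  (forall r, 0 < r -> is_derive du r (- ((INR (S m) - 1) / r) * du r - f r * pospow (upos (u r)) p)) ->
  filterlim du (at_right 0) (locally 0) ->
  Rpower (u (2 * r)) (p - 1) * (C1 * Rpower (2 * r) l * r ^ 2) < 3 ^ m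
  /\ u r <= (1 + 3 ^ m) * u (2 * r).
Proof.
  intros Hm Hp Hl HC1 Hr0 Hr Hf Hfl Hu Hd Hdd Hlim.
  set (v := fun t => - (t ^ m * du t)).
  assert (Hvm : forall a b, 0 < a <= b -> v a <= v b).
  { intros a b Hab; apply (v_mono m f u du p); auto. }
  assert (Hv0 : forall s, 0 < s -> 0 <= v s).
  { intros s Hs; apply (v_nonneg m f u du p); auto. }
  assert (Hum : forall a b, 0 < a <= b -> u b <= u a).
  { intros a b Hab; apply (u_mono m f u du p); auto. }
  assert (Hdu : forall t, 0 < t -> t ^ m * (- du t) = v t).
  { intros; unfold v; ring. }
  set (U := u (2 * r)). set (V := v (2 * r)).
  assert (HU : 0 < U) by (apply Hu; lra).
  assert (HV : 0 <= V) by (apply Hv0; lra).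
  assert (Hrm : 0 < r ^ m) by (apply pow_lt; lra).
  set (P2 := Rpower (2 * r) l).
  assert (HP2 : 0 < P2) by apply Rpower_pos.
  set (K := C1 * r ^ m * P2 * Rpower U p).
  assert (HK : 0 < K).
  { unfold K. pose proof (Rpower_pos U p). repeat apply Rmult_lt_0_compat; auto. }
  assert (Hi : K * r <= V).
  { assert (H1 : v r + - (K * r) <= v (2 * r) + - (K * (2 * r))).
    { apply (incr_lem (fun t => v t + - (K * t)) (fun t => t ^ m * f t * Rpower (u t) p - K)); [lra| |].
      - intros x Hx. eapply D_eq.
        + apply D_plus.
          * unfold v. apply (v_deriv m f u du p); auto; try lra. apply Hu; lra. apply Hdd; lra.
          * apply D_opp, D_mult; [apply D_const| apply D_id].
        + cbv beta. ring.
      - intros x Hx.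
        assert (h1 : r ^ m <= x ^ m) by (apply pow_incr; lra).
        assert (h2 : C1 * P2 <= f x).
        { apply Rle_trans with (C1 * Rpower x l); [|apply Hfl; lra].
          apply Rmult_le_compat_l; [lra|]. apply Rpower_decr_neg; lra. }
        assert (h3 : Rpower U p <= Rpower (u x) p).
        { apply Rle_Rpower_l; [lra|]. split; auto. apply Hum; lra. }
        assert (r ^ m * (C1 * P2) * Rpower U p <= x ^ m * f x * Rpower (u x) p).
        { apply Rmult_le_compat; [| |apply Rmult_le_compat; auto|auto].
          - apply Rmult_le_pos; [lra| apply Rmult_le_pos; lra].
          - pose proof (Rpower_pos U p); lra.
          - lra.
          - apply Rmult_le_pos; lra. }
        unfold K. lra. }
    pose proof (Hv0 r ltac:(lra)). fold V in H1. lra. }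
  set (k := V / (3 * r) ^ m).
  assert (H3m : (3 * r) ^ m = 3 ^ m * r ^ m) by apply Rpow_mult_distr.
  assert (H3p : 0 < (3 * r) ^ m) by (apply pow_lt; lra).
  assert (Hk : k * (3 * r) ^ m = V) by (unfold k; field; lra).
  assert (Hk0 : 0 <= k) by (unfold k; apply Rmult_le_pos; [lra| left; apply Rinv_0_lt_compat; lra]).
  assert (Hii : r * k < U).
  { assert (H1 : - u (2 * r) + - ((2 * r) * k) <= - u (3 * r) + - ((3 * r) * k)).
    { apply (incr_lem (fun t => - u t + - (t * k)) (fun t => - du t - k)); [lra| |].
      - intros x Hx. eapply D_eq.
        + apply D_plus; [apply D_opp, Hd; lra|].
          apply D_opp, D_mult; [apply D_id| apply D_const].
        + cbv beta. ring.
      - intros x Hx.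
        assert (h1 : x ^ m <= (3 * r) ^ m) by (apply pow_incr; lra).
        assert (h2 : V <= v x) by (apply Hvm; lra).
        assert (hx : 0 < x ^ m) by (apply pow_lt; lra).
        pose proof (Hdu x ltac:(lra)).
        assert (x ^ m * k <= (3 * r) ^ m * k) by (apply Rmult_le_compat_r; lra).
        assert (0 <= x ^ m * (- du x - k)) by nra.
        nra. }
    pose proof (Hu (3 * r) ltac:(lra)). fold U in H1. lra. }
  set (k' := V / r ^ m).
  assert (Hk' : k' * r ^ m = V) by (unfold k'; field; lra).
  assert (Hiii : u r + r * k' <= U + (2 * r) * k').
  { apply (incr_lem (fun t => u t + t * k') (fun t => du t + k')); [lra| |].
    - intros x Hx. eapply D_eq.
      + apply D_plus; [apply Hd; lra|].
        apply D_mult; [apply D_id| apply D_const].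
      + cbv beta. ring.
    - intros x Hx.
      assert (h1 : r ^ m <= x ^ m) by (apply pow_incr; lra).
      assert (h2 : v x <= V) by (apply Hvm; lra).
      assert (hx : 0 < x ^ m) by (apply pow_lt; lra).
      pose proof (Hdu x ltac:(lra)).
      assert (Hk'0 : 0 <= k') by (unfold k'; apply Rmult_le_pos; [lra| left; apply Rinv_0_lt_compat; lra]).
      assert (r ^ m * k' <= x ^ m * k') by (apply Rmult_le_compat_r; lra).
      assert (0 <= x ^ m * (du x + k')) by nra.
      nra. }
  assert (HrV : r * V < U * 3 ^ m * r ^ m).
  { rewrite <- Hk, H3m. assert (0 < r) by lra. nra. }
  split.
  - assert (HUp : Rpower U p = U * Rpower U (p - 1)).
    { rewrite <- (Rpower_1 U) at 2 by lra. rewrite <- Rpower_plus. f_equal; ring. }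
    unfold K in Hi. rewrite HUp in Hi.
    set (Q := Rpower U (p - 1)) in *.
    assert (Hmain : (U * r ^ m) * (Q * (C1 * P2 * r ^ 2)) < (U * r ^ m) * 3 ^ m).
    { assert (0 < r) by lra.
      assert (r * (C1 * r ^ m * P2 * (U * Q) * r) <= r * V) by (apply Rmult_le_compat_l; lra).
      simpl pow. nra. }
    apply Rmult_lt_reg_l with (U * r ^ m); [apply Rmult_lt_0_compat; lra| exact Hmain].
  - assert (r * k' < U * 3 ^ m).
    { unfold k'. assert (0 < r) by lra.
      apply Rmult_lt_reg_r with (r ^ m); [lra|].
      replace (r * (V / r ^ m) * r ^ m) with (r * V) by (field; lra). lra. }
    fold U. lra.
Qed.

Lemma Rpower_decr_npos (a b l : R) : l <= 0 -> 0 < a <= b -> Rpower b l <= Rpower a l.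
Proof.
  intros Hl Hab. destruct (Req_dec l 0) as [->|].
  - rewrite !Rpower_O by lra. lra.
  - apply Rpower_decr_neg; lra.
Qed.

Theorem lemma4p2 (n : nat) (l p : R) (f : R -> R) (r0 C1 : R) :
  (3 <= n)%nat ->
  -2 < l < 0 ->
  1 < p <= p_star n l ->
  (* (f_1) *)
  (forall r, 0 < r -> continuous f r) ->
  (forall r, 0 < r -> 0 < f r) ->
  (* (f_2): f(r) = O(r^l) as r -> oo *)
  (exists K R0, 0 < R0 /\ forall r, R0 <= r -> Rabs (f r) <= K * Rpower r l) ->
  (* (f_2'): f(r) = O(r^sigma) as r -> 0, sigma > -2 *)
  (exists sigma K delta, -2 < sigma /\ 0 < delta /\
      forall r, 0 < r < delta -> Rabs (f r) <= K * Rpower r sigma) ->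
  0 < r0 -> 0 < C1 ->
  (forall r, r0 < r -> C1 * Rpower r l <= f r) ->
  exists C, 0 < C /\
    forall (alpha : R) (u : R -> R),
      0 < alpha ->
      radial_sol n f p alpha u ->
      (forall r, 0 <= r -> 0 < u r) ->
      forall r, r0 <= r -> u r <= C * Rpower r ((2 - INR n) / 2).
Proof.
  intros Hn Hl Hp _ Hf _ _ Hr0 HC1 Hfl.
  destruct n as [|m]; [lia|].
  assert (Hm : (1 <= m)%nat) by lia.
  assert (HnR : 3 <= INR (S m)) by (replace 3 with (INR 3) by (simpl; ring); apply le_INR; exact Hn).
  set (K0 := 3 ^ m / (C1 * Rpower 2 l)).
  assert (HK0 : 0 < K0).
  { unfold K0. apply Rmult_lt_0_compat; [apply pow_lt; lra|].
    apply Rinv_0_lt_compat, Rmult_lt_0_compat; [lra| apply Rpower_pos]. }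
  set (e := - (2 + l) / (p - 1) - (2 - INR (S m)) / 2).
  assert (He : e <= 0).
  { unfold e. destruct Hp as [Hp1 Hp2]. unfold p_star in Hp2.
    assert (p * (INR (S m) - 2) <= INR (S m) + 2 + 2 * l).
    { apply Rmult_le_reg_r with (/ (INR (S m) - 2)).
      - apply Rinv_0_lt_compat; lra.
      - rewrite Rmult_assoc, Rinv_r by lra. lra. }
    assert (Hq : - (2 + l) / (p - 1) <= - (INR (S m) - 2) / 2); [|lra].
    unfold Rdiv. apply Rmult_le_reg_r with (2 * (p - 1)); [lra|].
    replace (- (2 + l) * / (p - 1) * (2 * (p - 1))) with (- 2 * (2 + l)) by (field; lra).
    replace (- (INR (S m) - 2) * / 2 * (2 * (p - 1))) with (- (INR (S m) - 2) * (p - 1)) by field.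
    nra. }
  exists ((1 + 3 ^ m) * Rpower K0 (/ (p - 1)) * Rpower r0 e).
  split.
  { apply Rmult_lt_0_compat; [apply Rmult_lt_0_compat|]; [|apply Rpower_pos|apply Rpower_pos].
    pose proof (pow_lt 3 m ltac:(lra)). lra. }
  intros alpha u Halpha [Hu0 [Hlim0 [du [Hd [Hlim Hdd]]]]] Hu r Hr.
  destruct (main_est m f u du p l C1 r0 r Hm ltac:(lra) ltac:(lra) HC1 Hr0 Hr Hf Hfl Hu Hd Hdd Hlim)
    as [H1 H2].
  set (U := u (2 * r)) in *.
  assert (HU : 0 < U) by (apply Hu; lra).
  assert (Hrp : 0 < r) by lra.
  set (Q := Rpower U (p - 1)) in *.
  assert (HD : C1 * Rpower (2 * r) l * r ^ 2 = C1 * Rpower 2 l * Rpower r (2 + l)).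
  { rewrite <- Rpower_mult_distr by lra.
    replace (r ^ 2) with (Rpower r (INR 2)) by (apply Rpower_pow; lra).
    rewrite Rpower_plus. simpl INR. replace (1 + 1) with 2 by ring. ring. }
  rewrite HD in H1.
  assert (HQ : Q < K0 * Rpower r (- (2 + l))).
  { rewrite Rpower_Ropp. unfold K0.
    assert (0 < Rpower 2 l) by apply Rpower_pos.
    assert (0 < Rpower r (2 + l)) by apply Rpower_pos.
    apply Rmult_lt_reg_r with (C1 * Rpower 2 l * Rpower r (2 + l)).
    - repeat apply Rmult_lt_0_compat; lra.
    - replace (3 ^ m / (C1 * Rpower 2 l) * / Rpower r (2 + l) * (C1 * Rpower 2 l * Rpower r (2 + l)))
        with (3 ^ m) by (field; repeat split; lra). exact H1. }
  assert (HUQ : U = Rpower Q (/ (p - 1))).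
  { unfold Q. rewrite Rpower_mult. replace ((p - 1) * / (p - 1)) with 1 by (field; lra).
    rewrite Rpower_1; auto. }
  assert (HUb : U < Rpower K0 (/ (p - 1)) * Rpower r (- (2 + l) / (p - 1))).
  { rewrite HUQ. unfold Rdiv. rewrite <- Rpower_mult, Rpower_mult_distr by (auto; apply Rpower_pos).
    apply Rlt_Rpower_l.
    - apply Rinv_0_lt_compat; lra.
    - split; [unfold Q; apply Rpower_pos| exact HQ]. }
  assert (Hsplit : Rpower r (- (2 + l) / (p - 1)) = Rpower r e * Rpower r ((2 - INR (S m)) / 2)).
  { rewrite <- Rpower_plus. f_equal. unfold e. ring. }
  assert (He2 : Rpower r e <= Rpower r0 e) by (apply Rpower_decr_npos; lra).
  assert (H3 : 0 < 1 + 3 ^ m) by (pose proof (pow_lt 3 m ltac:(lra)); lra).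
  apply Rle_trans with ((1 + 3 ^ m) * U); [exact H2|].
  rewrite !Rmult_assoc. apply Rmult_le_compat_l; [lra|].
  left. apply Rlt_le_trans with (1 := HUb).
  rewrite Hsplit.
  apply Rmult_le_compat_l; [left; apply Rpower_pos|].
  apply Rmult_le_compat_r; [left; apply Rpower_pos| exact He2].
Qed.
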